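(* Let $M$ be an algebraic number field of degree $m$ with ring of integers $\mathbb{Z}_M$ and integral basis $(1,\omega_2,\ldots,\omega_m)$. Let $\alpha$ be an algebraic integer over $M$ of degree $n$ over $M$, let $K=M(\alpha)$, and let $0\neq\mu\in\mathbb{Z}_M$. Let $S$ be the $m\times m$ matrix whose $j$-th row is $(1,\omega_2^{(j)},\ldots,\omega_m^{(j)})$, let $c_2$ be the row norm of $S^{-1}$ (the maximum over the rows of $S^{-1}$ of the sum of the absolute values of the entries of that row), and set \[ c_3=\frac{\sqrt[n]{\overline{|\mu|}}}{\overline{|\alpha|}},\qquad c_5=2c_2\,\overline{|\alpha|}. \] Suppose $X,Y\in\mathbb{Z}_M$ satisfy \[ N_{K/M}(X-\alpha Y)=\mu \] and $\overline{|Y|}>c_3$. Write $X=x_1+\omega_2x_2+\cdots+\omega_mx_m$ and $Y=y_1+\omega_2y_2+\cdots+\omega_my_m$ with $x_i,y_i\in\mathbb{Z}$, and put $A=\max(\max_i|x_i|,\max_i|y_i|)$. Then \[ A\le c_5\cdot\overline{|Y|}. \]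
   Context: Let $\sigma_1,\ldots,\sigma_m$ be the embeddings of $M$ into $\mathbb{C}$; for $\gamma\in M$ write $\gamma^{(j)}=\sigma_j(\gamma)$. Let $f(x)\in\mathbb{Z}_M[x]$ be the monic relative defining polynomial of $\alpha$ over $M$, and for $j=1,\ldots,m$ let $\alpha^{(j1)},\ldots,\alpha^{(jn)}$ be the roots of the polynomial obtained by applying $\sigma_j$ to the coefficients of $f$ (the relative conjugates of $\alpha$ over $M^{(j)}$). For an algebraic number $\gamma$, its size $\overline{|\gamma|}$ is the maximum of the absolute values of its conjugates; in particular $\overline{|\alpha|}=\max_{j,k}|\alpha^{(jk)}|$, $\overline{|Y|}=\max_j|Y^{(j)}|$, $\overline{|\mu|}=\max_j|\mu^{(j)}|$. *)

(* Defs.v *)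
From HB Require Import structures.
From mathcomp Require Import all_boot all_order all_algebra all_field.
Set Implicit Arguments. Unset Strict Implicit. Unset Printing Implicit Defensive.
Import Order.TTheory GRing.Theory Num.Theory.
Local Open Scope ring_scope.

Definition is_alg_int (R : nzRingType) (x : R) : Prop :=
  exists p : {poly int}, p \is monic /\ root (map_poly (fun z : int => z%:~R) p) x.

Definition relNorm (F : fieldType) (L : fieldExtType F) (b : L) : F :=
  \det (passmx.mxof (vbasis fullv) (vbasis fullv) (amull b)).

Definition cmax (I : finType) (f : I -> algC) : algC := \big[Num.max/0]_(i : I) f i.

Definition house (M : fieldType) (m : nat) (sigma : 'I_m -> {rmorphism M -> algC})
  (g : M) : algC := cmax (fun j : 'I_m => `|sigma j g|).

(* Main.v *)
Require Import Defs.
From HB Require Import structures.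
From mathcomp Require Import all_boot all_order all_algebra all_field.
From mathcomp Require Import ring.
Import Order.TTheory GRing.Theory Num.Theory.
Local Open Scope ring_scope.

Lemma max_real_ge {x y : algC} : x \is Num.real -> y \is Num.real ->
  x <= Num.max x y /\ y <= Num.max x y.
Proof. by move=> xr yr; case: (real_leP xr yr) => h; split => //; apply: ltW. Qed.

Lemma max_real_le {x y c : algC} : x \is Num.real -> y \is Num.real ->
  x <= c -> y <= c -> Num.max x y <= c.
Proof. by move=> xr yr; case: (real_leP xr yr). Qed.

Lemma cmax_real (I : finType) (f : I -> algC) : (forall i, 0 <= f i) ->
  cmax f \is Num.real.
Proof.
move=> h; rewrite /cmax; apply: bigmax_real => //= i _; exact: ger0_real.
Qed.

Lemma cmax_ge0 (I : finType) (f : I -> algC) : (forall i, 0 <= f i) -> 0 <= cmax f.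
Proof.
move=> h; rewrite /cmax; elim/big_ind: _ => //= x y hx hy.
have [+ _] := max_real_ge (ger0_real hx) (ger0_real hy).
exact: le_trans.
Qed.

Lemma bigmax_seq_real (I : Type) (r : seq I) (f : I -> algC) :
  (forall j, 0 <= f j) -> 0 <= \big[Num.max/0]_(j <- r) f j.
Proof.
move=> h; elim: r => [|a r IH]; first by rewrite big_nil.
rewrite big_cons; have [+ _] := max_real_ge (ger0_real (h a)) (ger0_real IH).
exact: le_trans.
Qed.

Lemma cmax_ub (I : finType) (f : I -> algC) i : (forall j, 0 <= f j) -> f i <= cmax f.
Proof.
move=> h; rewrite /cmax; have : i \in index_enum I by rewrite mem_index_enum.
elim: (index_enum I) => [|a r IH] //; rewrite inE big_cons => /orP [/eqP <-|ir].
  by have [] := max_real_ge (ger0_real (h i)) (ger0_real (bigmax_seq_real _ r _ h)).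
have [_ ] := max_real_ge (ger0_real (h a)) (ger0_real (bigmax_seq_real _ r _ h)).
exact/le_trans/IH.
Qed.

Lemma cmax_le (I : finType) (f : I -> algC) c : (forall j, 0 <= f j) ->
  (forall j, f j <= c) -> 0 <= c -> cmax f <= c.
Proof.
move=> h hc c0; rewrite /cmax; elim: (index_enum I) => [|a r IH]; first by rewrite big_nil.
by rewrite big_cons; apply: max_real_le => //; [exact: ger0_real|exact/ger0_real/bigmax_seq_real].
Qed.

Lemma charpoly_eval (R : comNzRingType) n (B : 'M[R]_n) x :
  (char_poly B).[x] = \det (x%:M - B).
Proof.
rewrite /char_poly -horner_evalE -det_map_mx; congr (\det _).
by apply/matrixP => i j; rewrite !mxE /= horner_evalE hornerD hornerN hornerMn hornerX hornerC.
Qed.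

Lemma det_pencil (R : fieldType) n (B : 'M[R]_n) (c : 'I_n -> R) a b :
  char_poly B = \prod_(k < n) ('X - (c k)%:P) ->
  \det (a%:M - b *: B) = \prod_(k < n) (a - b * c k).
Proof.
move=> hB; have [->|b0] := eqVneq b 0.
  by rewrite scale0r subr0 det_scalar; under eq_bigr do rewrite mul0r subr0;
     rewrite prodr_const card_ord.
have -> : a%:M - b *: B = b *: ((a / b)%:M - B).
  by rewrite scalerBr scale_scalar_mx mulrC divfK.
rewrite detZ -charpoly_eval hB horner_prod.
have -> : b ^+ n = \prod_(k < n) b by rewrite prodr_const card_ord.
rewrite -big_split /=.
by apply: eq_bigr => k _; rewrite !hornerE mulrBr mulrC divfK.
Qed.

Definition phiK {M : fieldType} {K : fieldExtType M} (b : K) :=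
  passmx.mxof (vbasis fullv) (vbasis fullv) (amull b).

Lemma phiK_mul (M : fieldType) (K : fieldExtType M) (u v : K) :
  phiK (u * v) = phiK u *m phiK v.
Proof.
have eb := vbasisP (fullv : {vspace K}).
rewrite /phiK mulrC amullM -FalgLfun.lfun_compE (passmx.mxof_comp _ _ eb) //.
Qed.

Lemma phiK_add (M : fieldType) (K : fieldExtType M) (u v : K) :
  phiK (u + v) = phiK u + phiK v.
Proof.
rewrite /phiK linearD /=.
by have := passmx.mxof_linear (vbasis fullv) (vbasis fullv) 1 (amull u) (amull v); rewrite !scale1r.
Qed.

Lemma mxof0 (M : fieldType) (K : fieldExtType M) :
  passmx.mxof (vbasis (fullv : {vspace K})) (vbasis (fullv : {vspace K})) 0 = 0.
Proof.
have := passmx.mxof_linear (vbasis (fullv : {vspace K})) (vbasis (fullv : {vspace K})) 1 0 0.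
rewrite !scale1r addr0 => h. apply: (addrI (passmx.mxof (vbasis (fullv : {vspace K})) (vbasis (fullv : {vspace K})) 0)). by rewrite addr0 -h.
Qed.

Lemma mxofZ (M : fieldType) (K : fieldExtType M) c (g : 'End(K)) :
  passmx.mxof (vbasis (fullv : {vspace K})) (vbasis (fullv : {vspace K})) (c *: g) =
  c *: passmx.mxof (vbasis (fullv : {vspace K})) (vbasis (fullv : {vspace K})) g.
Proof.
have := passmx.mxof_linear (vbasis (fullv : {vspace K})) (vbasis (fullv : {vspace K})) c g 0.
by rewrite !addr0 mxof0 addr0.
Qed.

Lemma phiK_alg (M : fieldType) (K : fieldExtType M) (c : M) :
  phiK (c%:A : K) = c%:M.
Proof.
have eb := vbasisP (fullv : {vspace K}).
rewrite /phiK linearZ /= amull1 mxofZ passmx.mxof1 ?(basis_free eb) //.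
by rewrite scale_scalar_mx mulr1.
Qed.

Lemma phiK_inj (M : fieldType) (K : fieldExtType M) (u : K) :
  phiK u = 0 -> u = 0.
Proof.
have eb := vbasisP (fullv : {vspace K}).
move/eqP; rewrite /phiK (passmx.mxof_eq0 eb eb) => /eqP h.
by apply: amull_inj; rewrite h linear0.
Qed.

Lemma root_char_abstract (M : fieldType) (K : fieldExtType M) d
  (phi : K -> 'M[M]_d) (a : K) : (0 < d)%N ->
  (forall u v, phi (u * v) = phi u *m phi v) ->
  (forall u v, phi (u + v) = phi u + phi v) ->
  (forall c, phi (c%:A) = c%:M) -> (forall u, phi u = 0 -> u = 0) ->
  root (map_poly (in_alg K) (char_poly (phi a))) a.
Proof.
case: d phi => // d phi _ hM hD hA hI.
have hh : forall q : {poly M}, phi ((map_poly (in_alg K) q).[a]) = horner_mx (phi a) q.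
  elim/poly_ind => [|q c IH].
    by rewrite map_poly0 horner0 rmorph0 -(scale0r (1 : K)) hA; apply/matrixP=> i j; rewrite !mxE mul0rn.
  rewrite rmorphD rmorphM /= map_polyX map_polyC /= hornerMXaddC hD hM IH.
  by rewrite hA rmorphD rmorphM /= horner_mx_X horner_mx_C.
by apply/eqP/hI; rewrite hh Cayley_Hamilton.
Qed.

Lemma charpoly_phiK (M : fieldType) (K : fieldExtType M) (alpha : K) (n : nat)
  (hK : (<<1; alpha>>)%VS = fullv) (hn : \dim {:K} = n)
  (f : {poly M}) (hfmon : f \is monic) (hfsize : size f = n.+1)
  (hfroot : root (map_poly (in_alg K) f) alpha) :
  char_poly (phiK alpha) = f.
Proof.
set p := char_poly _.
have n0 : (0 < n)%N.
  by rewrite -hn; exact: adim_gt0.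
have rp : root (map_poly (in_alg K) p) alpha.
  apply: root_char_abstract; first by rewrite hn.
  - exact: phiK_mul.
  - exact: phiK_add.
  - exact: phiK_alg.
  - exact: phiK_inj.
have adeg : adjoin_degree 1%AS alpha = n.
  by rewrite -hn -hK (dim_Fadjoin 1%AS alpha) dimv1 muln1.
apply/eqP; rewrite -subr_eq0; apply/eqP.
set g := p - f.
have sp : size p = n.+1 by rewrite /p size_char_poly hn.
have lp : p`_n = 1.
  by have := monicP (char_poly_monic (phiK alpha)); rewrite -/p /lead_coef sp.
have lf : f`_n = 1 by have := monicP hfmon; rewrite /lead_coef hfsize.
have sg : (size g <= n)%N.
  apply/leq_sizeP => j; rewrite leq_eqVlt => /orP [/eqP <-|hj].
    by rewrite coefB lp lf subrr.
  by rewrite coefB !nth_default ?subrr // ?hfsize ?sp.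
have : root (map_poly (in_alg K) g) alpha.
  by rewrite /root rmorphB /= hornerD hornerN (eqP rp) (eqP hfroot) subrr.
rewrite (root_small_adjoin_poly (K := 1%AS)).
- by rewrite map_poly_eq0 => /eqP.
- by apply/polyOver1P; exists g.
- by rewrite size_map_poly adeg.
Qed.

Lemma det_pencil' (R : fieldType) d n (B : 'M[R]_d) (c : 'I_n -> R) a b :
  d = n -> char_poly B = \prod_(k < n) ('X - (c k)%:P) ->
  \det (a%:M - b *: B) = \prod_(k < n) (a - b * c k).
Proof. by move=> e; subst d; exact: det_pencil. Qed.

Lemma phiK_sub (M : fieldType) (K : fieldExtType M) (u v : K) :
  phiK (u - v) = phiK u - phiK v.
Proof. by apply/eqP; rewrite eq_sym subr_eq -phiK_add subrK. Qed.

Lemma norm_conj (M : fieldType) (K : fieldExtType M) (alpha : K) (n : nat)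
  (hK : (<<1; alpha>>)%VS = fullv) (hn : \dim {:K} = n)
  (f : {poly M}) (hfmon : f \is monic) (hfsize : size f = n.+1)
  (hfroot : root (map_poly (in_alg K) f) alpha)
  (s : {rmorphism M -> algC}) (c : 'I_n -> algC)
  (hc : map_poly s f = \prod_(k < n) ('X - (c k)%:P)) (a b : M) :
  s (relNorm (a%:A - alpha * b%:A)) = \prod_(k < n) (s a - s b * c k).
Proof.
rewrite /relNorm -/(phiK _) phiK_sub phiK_mul !phiK_alg mul_mx_scalar -det_map_mx.
rewrite map_mxB map_mxZ /= map_scalar_mx.
apply: det_pencil' => //.
by rewrite -map_char_poly (charpoly_phiK _ _ _ _ hK hn _ hfmon hfsize hfroot).
Qed.

Lemma ratr_rat (q : rat) : ratr q = q.
Proof. by rewrite /ratr divq_num_den. Qed.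

Lemma sigma_alg (L : fieldExtType rat) (s : {rmorphism L -> algC}) (q : rat) :
  s (q%:A) = ratr q.
Proof.
have -> : q%:A = ratr q :> L by rewrite -(fmorph_rat (in_alg L)) ratr_rat.
exact: fmorph_rat.
Qed.

Lemma sigma_scale (L : fieldExtType rat) (s : {rmorphism L -> algC}) (q : rat) w :
  s (q *: w) = ratr q * s w.
Proof. by rewrite -mulr_algl rmorphM /= sigma_alg. Qed.

Lemma small_root (M : fieldType) (K : fieldExtType M) (alpha : K) (n : nat)
  (hK : (<<1; alpha>>)%VS = fullv) (hn : \dim {:K} = n) (r : {poly M}) :
  (size r <= n)%N -> root (map_poly (in_alg K) r) alpha -> r = 0.
Proof.
move=> sr; have adeg : adjoin_degree 1%AS alpha = n.
  by rewrite -hn -hK (dim_Fadjoin 1%AS alpha) dimv1 muln1.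
rewrite (root_small_adjoin_poly (K := 1%AS)).
- by rewrite map_poly_eq0 => /eqP.
- by apply/polyOver1P; exists r.
- by rewrite size_map_poly adeg.
Qed.

Lemma conj_root (M : fieldType) (K : fieldExtType M) (alpha : K) (n : nat)
  (hK : (<<1; alpha>>)%VS = fullv) (hn : \dim {:K} = n)
  (f : {poly M}) (hfmon : f \is monic) (hfsize : size f = n.+1)
  (hfroot : root (map_poly (in_alg K) f) alpha)
  (s : {rmorphism M -> algC}) (c : 'I_n -> algC)
  (hc : map_poly s f = \prod_(k < n) ('X - (c k)%:P)) (p : {poly M}) k :
  root (map_poly (in_alg K) p) alpha -> root (map_poly s p) (c k).
Proof.
move=> rp.
have f0 : f != 0 by rewrite -size_poly_eq0 hfsize.
have r0 : p %% f = 0.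
  apply: (small_root _ _ _ _ hK hn).
    by rewrite -ltnS -hfsize ltn_modp.
  move: rp; rewrite {1}(divp_eq p f) /root rmorphD rmorphM /= hornerD hornerM.
  by rewrite (eqP hfroot) mulr0 add0r.
rewrite (divp_eq p f) r0 addr0 rmorphM /= hc /root hornerM horner_prod.
by rewrite (bigD1 k) //= hornerXsubC subrr mul0r mulr0.
Qed.

Lemma conj_Aint (M : fieldType) (K : fieldExtType M) (alpha : K) (n : nat)
  (hK : (<<1; alpha>>)%VS = fullv) (hn : \dim {:K} = n)
  (f : {poly M}) (hfmon : f \is monic) (hfsize : size f = n.+1)
  (hfroot : root (map_poly (in_alg K) f) alpha)
  (s : {rmorphism M -> algC}) (c : 'I_n -> algC)
  (hc : map_poly s f = \prod_(k < n) ('X - (c k)%:P)) k :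
  is_alg_int alpha -> c k \in Aint.
Proof.
case=> p [pmon rp].
have := conj_root _ _ _ _ hK hn _ hfmon hfsize hfroot _ _ hc (map_poly (fun z : int => z%:~R) p) k.
rewrite -!map_poly_comp.
have e1 : forall z : int, (in_alg K \o (fun z : int => z%:~R : M)) z = z%:~R.
  by move=> z; apply: rmorph_int.
have e2 : forall z : int, (s \o (fun z : int => z%:~R : M)) z = z%:~R.
  by move=> z; apply: rmorph_int.
rewrite (eq_map_poly e1) (eq_map_poly e2) => /(_ rp) rc.
apply: root_monic_Aint rc _ _.
  exact: (monic_map (intr : {rmorphism int -> algC})) pmon.
by apply/polyOverP => i; rewrite coef_map /= intr_int.
Qed.

Lemma dedekind (L : fieldType) m (sigma : 'I_m -> {rmorphism L -> algC})
  (hsigma : forall j k : 'I_m, (forall x : L, sigma j x = sigma k x) -> j = k)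
  (s : seq 'I_m) : uniq s -> forall u : 'I_m -> algC,
  (forall x, \sum_(j <- s) u j * sigma j x = 0) -> forall j, j \in s -> u j = 0.
Proof.
elim: s => [|j0 s IH] //= /andP [j0s us] u H.
have H' : forall y, forall j, j \in s -> u j * (sigma j y - sigma j0 y) = 0.
  move=> y; apply: IH => // x.
  have := H (y * x); have := H x; rewrite !big_cons => h1 h2.
  have : u j0 * sigma j0 (y * x) + \sum_(j <- s) u j * sigma j (y * x)
        - sigma j0 y * (u j0 * sigma j0 x + \sum_(j <- s) u j * sigma j x) = 0.
    by rewrite h1 h2 mulr0 subr0.
  rewrite mulrDr rmorphM /= opprD addrACA [X in X + _ = _]addrC.
  rewrite [u j0 * (_ * _)]mulrCA addNr add0r mulr_sumr -sumrB => h.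
  apply: (eq_trans _ h).
  by apply: eq_bigr => j _; rewrite rmorphM /=; ring.
have Hs : forall j, j \in s -> u j = 0.
  move=> j js; apply/eqP; apply: contraT => uj0.
  have ej : j = j0.
    apply: hsigma => x; apply/eqP; rewrite -subr_eq0.
    by have /eqP := H' x j js; rewrite mulf_eq0 (negPf uj0).
  by move: j0s; rewrite -ej js.
move=> j; rewrite inE => /orP [/eqP ->|]; last exact: Hs.
have := H 1; rewrite big_cons big_seq big1 ?addr0 ?rmorph1 ?mulr1 //.
by move=> j1 j1s; rewrite Hs // mul0r.
Qed.

Lemma omega_basis (M : fieldExtType rat) (m : nat) (hm : \dim {:M} = m)
  (omega : 'I_m -> M)
  (homega_free : forall c c' : 'I_m -> int,
      \sum_i (c i)%:~R * omega i = \sum_i (c' i)%:~R * omega i ->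
      forall i, c i = c' i) :
  basis_of fullv (mktuple omega).
Proof.
rewrite basisEfree subvf size_tuple hm leqnn andbT /=.
rewrite andbT; apply/(@freeP _ _ _ (mktuple omega)) => k hk i.
pose D := \prod_(l < m) denq (k l).
pose c := fun i => numq (k i) * \prod_(l < m | l != i) denq (k l).
have hc : forall i, (c i)%:~R = k i * D%:~R :> rat.
  move=> i0; rewrite /c /D [in RHS](bigD1 i0) //= !intrM numqE mulrA.
  by rewrite !rmorph_prod.
have D0 : (D%:~R : rat) != 0.
  rewrite intr_eq0 /D prodf_seq_neq0; apply/allP => l _; exact: denq_neq0.
have := homega_free c (fun _ => 0) _ i.
have -> : \sum_i (c i)%:~R * omega i = D%:~R *: \sum_(i < m) k i *: (mktuple omega)`_i.
  rewrite scaler_sumr; apply: eq_bigr => i1 _.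
  by rewrite nth_mktuple mulrzl -scaler_int hc scalerA mulrC.
rewrite hk scaler0.
move=> h; have ci : c i = 0.
  by apply: h; rewrite big1 // => j _; rewrite mul0r.
by move: (hc i); rewrite ci mulrC => /esym /eqP; rewrite mulf_eq0 (negPf D0) /= => /eqP.
Qed.

Lemma sigma_coord (M : fieldExtType rat) (m : nat) (hm : \dim {:M} = m)
  (omega : 'I_m -> M)
  (homega_free : forall c c' : 'I_m -> int,
      \sum_i (c i)%:~R * omega i = \sum_i (c' i)%:~R * omega i ->
      forall i, c i = c' i) (s : {rmorphism M -> algC}) (x : M) :
  s x = \sum_i ratr (coord (mktuple omega) i x) * s (omega i).
Proof.
have eb := omega_basis _ _ hm _ homega_free.
rewrite {1}(coord_basis eb (memvf x)) rmorph_sum /=; apply: eq_bigr => i _.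
by rewrite sigma_scale nth_mktuple.
Qed.

Lemma S_unit (M : fieldExtType rat) (m : nat) (hm : \dim {:M} = m)
  (sigma : 'I_m -> {rmorphism M -> algC})
  (hsigma : forall j k : 'I_m, (forall x : M, sigma j x = sigma k x) -> j = k)
  (omega : 'I_m -> M)
  (homega_free : forall c c' : 'I_m -> int,
      \sum_i (c i)%:~R * omega i = \sum_i (c' i)%:~R * omega i ->
      forall i, c i = c' i) :
  (\matrix_(j, i) sigma j (omega i) : 'M[algC]_m) \in unitmx.
Proof.
rewrite unitmxE unitfE; apply/negP => /det0P [v v0 hv].
move/negP: v0; apply; apply/eqP/rowP => j; rewrite mxE.
have hvi : forall i, \sum_j v 0 j * sigma j (omega i) = 0.
  move=> i; have := congr1 (fun A : 'rV_m => A 0 i) hv; rewrite !mxE => h.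
  by apply: (eq_trans _ h); apply: eq_bigr => j1 _; rewrite mxE.
suff H : forall x, \sum_(j <- index_enum 'I_m) v 0 j * sigma j x = 0.
  exact: (dedekind _ _ _ hsigma _ (index_enum_uniq _) (fun j => v 0 j) H j (mem_index_enum j)).
move=> x.
under eq_bigr do rewrite (sigma_coord _ _ hm _ homega_free) mulr_sumr.
rewrite exchange_big /= big1 // => i _.
under eq_bigr do rewrite mulrCA.
by rewrite -mulr_sumr hvi mulr0.
Qed.

Lemma coef_bound (M : fieldExtType rat) (m : nat) (hm : \dim {:M} = m)
  (sigma : 'I_m -> {rmorphism M -> algC})
  (hsigma : forall j k : 'I_m, (forall x : M, sigma j x = sigma k x) -> j = k)
  (omega : 'I_m -> M)
  (homega_free : forall c c' : 'I_m -> int,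
      \sum_i (c i)%:~R * omega i = \sum_i (c' i)%:~R * omega i ->
      forall i, c i = c' i)
  (Z : M) (z : 'I_m -> int) (hz : Z = \sum_i (z i)%:~R * omega i)
  (B : algC) (hB : forall j, `|sigma j Z| <= B) (i : 'I_m) :
  `|(z i)%:~R : algC| <=
    cmax (fun j : 'I_m => \sum_(i < m) `|invmx (\matrix_(j, i) sigma j (omega i) : 'M[algC]_m) j i|) * B.
Proof.
set S := (\matrix_(j, i) sigma j (omega i) : 'M[algC]_m).
have SU : S \in unitmx by exact: S_unit hm sigma hsigma omega homega_free.
pose zc : 'cV[algC]_m := \col_i (z i)%:~R.
pose vZ : 'cV[algC]_m := \col_j sigma j Z.
have hS : S *m zc = vZ.
  apply/colP => j; rewrite !mxE hz rmorph_sum /=; apply: eq_bigr => i1 _.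
  by rewrite !mxE rmorphM /= rmorph_int mulrC.
have e : (z i)%:~R = \sum_j invmx S i j * sigma j Z.
  have := congr1 (fun A : 'cV_m => A i 0) (mulKmx SU zc); rewrite hS !mxE => <-.
  by apply: eq_bigr => j _; rewrite mxE.
have B0 : 0 <= B by exact: le_trans (normr_ge0 _) (hB i).
rewrite e; apply: le_trans (ler_norm_sum _ _ _) _.
apply: (@le_trans _ _ ((\sum_(j < m) `|invmx S i j|) * B)).
  rewrite mulr_suml; apply: ler_sum => j _; rewrite normrM.
  by apply: ler_wpM2l => //.
apply: ler_wpM2r => //.
by apply: (cmax_ub _ (fun j : 'I_m => \sum_(i0 < m) `|invmx S j i0|) i) => j; apply: sumr_ge0.
Qed.

Lemma prod_sigma_rat (M : fieldExtType rat) (m : nat) (hm : \dim {:M} = m)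
  (sigma : 'I_m -> {rmorphism M -> algC})
  (hsigma : forall j k : 'I_m, (forall x : M, sigma j x = sigma k x) -> j = k)
  (omega : 'I_m -> M)
  (homega_free : forall c c' : 'I_m -> int,
      \sum_i (c i)%:~R * omega i = \sum_i (c' i)%:~R * omega i ->
      forall i, c i = c' i) (b : M) :
  \prod_(j < m) sigma j b \in Crat.
Proof.
set S := (\matrix_(j, i) sigma j (omega i) : 'M[algC]_m).
have SU : S \in unitmx by exact: S_unit hm sigma hsigma omega homega_free.
pose Bq : 'M[rat]_m := \matrix_(l, i) coord (mktuple omega) l (b * omega i).
have hSB : S *m map_mx ratr Bq = diag_mx (\row_j sigma j b) *m S.
  apply/matrixP => j i; rewrite mul_diag_mx !mxE.
  rewrite -rmorphM /= (sigma_coord _ _ hm _ homega_free); apply: eq_bigr => l _.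
  by rewrite !mxE mulrC.
have := congr1 determinant hSB; rewrite !det_mulmx det_map_mx det_diag mulrC => /mulIf.
rewrite unitmxE unitfE in SU => /(_ SU) h.
have -> : \prod_(j < m) sigma j b = \prod_(j < m) (\row_j sigma j b) 0 j.
  by apply: eq_bigr => j _; rewrite mxE.
rewrite -h; exact: Crat_rat.
Qed.

Theorem theorem1
  (M : fieldExtType rat) (m : nat) (hm : \dim {:M} = m)
  (sigma : 'I_m -> {rmorphism M -> algC})
  (hsigma : forall j k : 'I_m, (forall x : M, sigma j x = sigma k x) -> j = k)
  (omega : 'I_m -> M)
  (homega1 : forall i : 'I_m, val i = 0%N -> omega i = 1)
  (homega_int : forall i, is_alg_int (omega i))
  (homega_span : forall x : M, is_alg_int x ->
      exists c : 'I_m -> int, x = \sum_i (c i)%:~R * omega i)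
  (homega_free : forall c c' : 'I_m -> int,
      \sum_i (c i)%:~R * omega i = \sum_i (c' i)%:~R * omega i ->
      forall i, c i = c' i)
  (K : fieldExtType M) (alpha : K) (n : nat)
  (hK : (<<1; alpha>>)%VS = fullv) (hn : \dim {:K} = n)
  (halpha : is_alg_int alpha)
  (f : {poly M}) (hfmon : f \is monic) (hfsize : size f = n.+1)
  (hfroot : root (map_poly (in_alg K) f) alpha)
  (conj : 'I_m -> 'I_n -> algC)
  (hconj : forall j : 'I_m,
      map_poly (sigma j) f = \prod_(k < n) ('X - (conj j k)%:P))
  (mu : M) (hmu_int : is_alg_int mu) (hmu0 : mu != 0)
  (X Y : M) (hX : is_alg_int X) (hY : is_alg_int Y)
  (hnorm : relNorm (X%:A - alpha * Y%:A) = mu)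
  (hYbig : n.-root (house sigma mu) < cmax (fun jk : 'I_m * 'I_n => `|conj jk.1 jk.2|) * house sigma Y)
  (x y : 'I_m -> int)
  (hx : X = \sum_i (x i)%:~R * omega i)
  (hy : Y = \sum_i (y i)%:~R * omega i) :
  let S : 'M[algC]_m := \matrix_(j, i) sigma j (omega i) in
  let c2 := cmax (fun j : 'I_m => \sum_(i < m) `|invmx S j i|) in
  let c5 := 2 * c2 * cmax (fun jk : 'I_m * 'I_n => `|conj jk.1 jk.2|) in
  ((\max_(i < m) maxn `|x i|%N `|y i|%N)%N)%:R <= c5 * house sigma Y.
Proof.
cbv zeta.
set S : 'M[algC]_m := \matrix_(j, i) sigma j (omega i).
set c2 := cmax (fun j : 'I_m => \sum_(i < m) `|invmx S j i|).
set cA := cmax (fun jk : 'I_m * 'I_n => `|conj jk.1 jk.2|) in hYbig *.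
set HY := house sigma Y in hYbig *.
set r := n.-root (house sigma mu) in hYbig.
have n0 : (0 < n)%N by rewrite -hn; exact: adim_gt0.
have cA0 : 0 <= cA by apply: cmax_ge0 => jk.
have HY0 : 0 <= HY by apply: cmax_ge0 => j.
have hmu0' : 0 <= house sigma mu by apply: cmax_ge0 => j.
have r0 : 0 <= r by rewrite /r rootC_ge0.
have cApos : 0 < cA.
  rewrite lt_def cA0 andbT; apply/eqP => e.
  by move: (le_lt_trans r0 hYbig); rewrite e mul0r ltxx.
have c20 : 0 <= c2 by apply: cmax_ge0 => j; apply: sumr_ge0.
have hXb : forall j, `|sigma j X| <= 2 * cA * HY.
  move=> j.
  have hp := norm_conj _ _ _ _ hK hn _ hfmon hfsize hfroot _ _ (hconj j) X Y.
  rewrite hnorm in hp.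
  have [k hk] : exists k, `|sigma j X - sigma j Y * conj j k| <= r.
    case: (boolP [exists k, `|sigma j X - sigma j Y * conj j k| <= r]).
      by move=> /existsP [k hk]; exists k.
    move=> /existsPn hlt; exfalso.
    have hlt' : forall k, r < `|sigma j X - sigma j Y * conj j k|.
      by move=> k; rewrite real_ltNge ?hlt ?ger0_real.
    have : house sigma mu < house sigma mu.
      apply: (@lt_le_trans _ _ `|sigma j mu|); last first.
        by apply: (cmax_ub _ (fun j0 => `|sigma j0 mu|) j) => j0.
      apply: (@le_lt_trans _ _ (\prod_(k < n) r)).
        by rewrite prodr_const card_ord /r rootCK.
      rewrite hp normr_prod; apply: ltr_prod.
        by apply/hasP; exists (Ordinal n0); rewrite ?mem_index_enum.
      by move=> k _; apply/andP; split; [exact: r0|exact: hlt'].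
    by rewrite ltxx.
  have hYj : `|sigma j Y| <= HY by apply: (cmax_ub _ (fun j0 => `|sigma j0 Y|) j) => j0.
  have hcj : `|conj j k| <= cA.
    by apply: (cmax_ub _ (fun jk : 'I_m * 'I_n => `|conj jk.1 jk.2|) (j, k)) => jk.
  rewrite -(subrK (sigma j Y * conj j k) (sigma j X)).
  apply: le_trans (ler_normD _ _) _.
  have e2 : 2 * cA * HY = cA * HY + HY * cA by ring.
  rewrite e2; apply: lerD; first exact: le_trans hk (ltW hYbig).
  by rewrite normrM; apply: ler_pM.
have alpha0 : alpha != 0.
  apply/eqP => a0.
  have hc0 : forall j k, conj j k = 0.
    move=> j k.
    have := conj_root _ _ _ _ hK hn _ hfmon hfsize hfroot _ _ (hconj j) 'X k.
    rewrite !map_polyX /root !hornerX a0 eqxx => /(_ isT) /eqP //.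
  have : cA <= 0 by apply: cmax_le => // jk; rewrite hc0 normr0.
  by move/(lt_le_trans cApos); rewrite ltxx.
have m0 : (0 < m)%N.
  rewrite lt0n; apply/eqP => m0.
  have : cA <= 0.
    apply: cmax_le => // -[[j hj] k]; have : (j < 0)%N by rewrite -m0.
    by [].
  by move/(lt_le_trans cApos); rewrite ltxx.
pose beta := relNorm (0%:A - alpha * (-1)%:A).
have hb : forall j, sigma j beta = \prod_(k < n) conj j k.
  move=> j; rewrite /beta (norm_conj _ _ _ _ hK hn _ hfmon hfsize hfroot _ _ (hconj j)).
  by apply: eq_bigr => k _; rewrite rmorph0 rmorphN1 sub0r mulN1r opprK.
have b0 : beta != 0.
  have ea : (0%:A - alpha * (-1)%:A) = alpha.
    by rewrite scale0r sub0r scaleN1r mulrN mulr1 opprK.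
  rewrite /beta ea /relNorm -/(phiK alpha).
  have := congr1 determinant (phiK_mul _ _ alpha alpha^-1).
  rewrite divff // -(scale1r (1 : K)) phiK_alg det_mulmx det1.
  by apply: contra_eqN => /eqP ->; rewrite mul0r oner_neq0.
have Pr := prod_sigma_rat _ _ hm _ hsigma _ homega_free beta.
have PA : \prod_(j < m) sigma j beta \in Aint.
  rewrite (eq_bigr _ (fun j _ => hb j)); apply: rpred_prod => j _.
  apply: rpred_prod => k _.
  exact: (conj_Aint _ _ _ _ hK hn _ hfmon hfsize hfroot _ _ (hconj j) k halpha).
have P0 : \prod_(j < m) sigma j beta != 0.
  by rewrite prodf_seq_neq0; apply/allP => j _; rewrite fmorph_eq0.
have P1 := norm_intr_ge1 (Cint_rat_Aint Pr PA) P0.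
have cA1 : 1 <= cA.
  case: (@real_ltP _ cA 1 (ger0_real cA0) (real1 _)) => // hlt.
  have : `|\prod_(j < m) sigma j beta| <= \prod_(j < m) cA ^+ n.
    rewrite normr_prod; apply: ler_prod => j _; rewrite normr_ge0 /= hb normr_prod.
    have -> : cA ^+ n = \prod_(k < n) cA by rewrite prodr_const card_ord.
    apply: ler_prod => k _.
    rewrite normr_ge0 /=.
    by apply: (cmax_ub _ (fun jk : 'I_m * 'I_n => `|conj jk.1 jk.2|) (j, k)) => jk.
  rewrite prodr_const card_ord => hle.
  have : (cA ^+ n) ^+ m < 1.
    by rewrite exprn_ilt1 ?exprn_ge0 ?exprn_ilt1 // -lt0n.
  by move=> /(le_lt_trans (le_trans P1 hle)); rewrite ltxx.
have hxi : forall i, `|(x i)%:~R : algC| <= c2 * (2 * cA * HY).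
  exact: (coef_bound _ _ hm _ hsigma _ homega_free X x hx _ hXb).
have hyi : forall i, `|(y i)%:~R : algC| <= c2 * HY.
  apply: (coef_bound _ _ hm _ hsigma _ homega_free Y y hy).
  by move=> j; apply: (cmax_ub _ (fun j0 => `|sigma j0 Y|) j) => j0.
have B0 : 0 <= 2 * c2 * cA * HY by rewrite !mulr_ge0.
have hb' : forall i, ((maxn `|x i| `|y i|)%N)%:R <= 2 * c2 * cA * HY.
  move=> i; rewrite /maxn; case: ifP => _; rewrite natr_absz intr_norm.
    apply: le_trans (hyi i) _.
    have -> : 2 * c2 * cA * HY = (c2 * HY) * (2 * cA) by ring.
    rewrite -{1}[c2 * HY]mulr1; apply: ler_wpM2l; first exact: mulr_ge0.
    apply: (le_trans cA1); rewrite mulr2n mulrDl mul1r lerDr //.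
  by apply: le_trans (hxi i) _; rewrite le_eqVlt; apply/orP; left; apply/eqP; ring.
elim/big_ind: _ => //.
- by move=> a b ha hb2; rewrite /maxn; case: ifP.
Qed.
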